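(* Let $\mathcal G=((V,E),(V_1,V_2,V_\Diamond),\delta,w)$ be a stochastic game and $\varphi$ a bounded prefix-independent objective. Consider the classes of the expected value vector $\mathsf r^*=(\mathbb{E}_v(\varphi))_{v\in V}$, and suppose exactly $m\ge1$ of them contain boundary vertices. Index the classes as $C_1,\dots,C_k$ so that $C_1,\dots,C_m$ are those containing boundary vertices, in increasing order of value, and $C_{m+1},\dots,C_k$ are those without boundary vertices, in increasing order of value. For $1\le i\le m$ fix a boundary vertex $u_i$ of $C_i$ and for $1\le j\le k$ let $p_{i,j}=\sum_{v'\in E(u_i)\cap C_j}\delta(u_i)(v')$. Let $Q_B=(p_{i,j})_{1\le i,j\le m}$, $I$ the $m\times m$ identity matrix, $\alpha$ the least common multiple of the denominators of the $p_{i,j}$ ($1\le i\le m$, $1\le j\le k$), and $D=\det(\alpha(I-Q_B))$. Let $N$ be the maximum denominator (in lowest terms) of the probabilities $\delta(v)(v')$ occurring in $\mathcal G$. Then $D$ is an integer and $|D|\le(2\alpha)^m\le 2^{|V|}\cdot N^{|V|^3}$.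
   Context: A stochastic game is $\mathcal{G}=((V,E),(V_1,V_2,V_\Diamond),\delta,w)$: a finite directed graph $(V,E)$ in which every vertex $v$ has a nonempty out-neighbour set $E(v)$, a partition of $V$ into Player 1, Player 2 and probabilistic vertices, a function $\delta$ giving each $v\in V_\Diamond$ a rational probability distribution $\delta(v)$ on $E(v)$, positive on every out-neighbour, and payoffs $w:E\to\mathbb{Q}$. Plays are infinite paths; deterministic strategies of Player $i$ map finite prefixes ending in $V_i$ to an out-neighbour of the last vertex; a strategy pair and initial vertex induce a probability measure on plays. An objective $\varphi$ is a Borel-measurable real function on plays; bounded if $|\varphi|\le W_\varphi$ for an integer $W_\varphi$; prefix-independent if plays with a common suffix get equal value. $\mathbb{E}_v(\varphi)=\sup_{\sigma_1}\inf_{\sigma_2}\mathbb{E}^{\sigma_1,\sigma_2}_v[\varphi]=\inf_{\sigma_2}\sup_{\sigma_1}\mathbb{E}^{\sigma_1,\sigma_2}_v[\varphi]$ (Player 1 maximises, Player 2 minimises). For a real vector $\mathsf r$ indexed by $V$, its classes are the maximal nonempty sets of vertices on which $\mathsf r$ is constant (the constant being the class value); a vertex $v$ of class $C$ is a boundary vertex if $v\in V_\Diamond$ and $E(v)\not\subseteq C$. *)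

(* Defs.v *)
From HB Require Import structures.
From mathcomp Require Import all_boot all_order all_algebra.
From mathcomp Require Import all_classical all_reals all_analysis.

Unset Printing Implicit Defensive.

Import Order.TTheory GRing.Theory Num.Theory.
Local Open Scope classical_set_scope.
Local Open Scope ring_scope.

Inductive player := Player1 | Player2 | Random.

Record game (V : finType) := Game {
  edge  : rel V;
  owner : V -> player;
  delta : V -> V -> rat;       (* δ(v)(v'), meaningful for v ∈ V_◇ *)
  payoff : V -> V -> rat
}.
Arguments edge {V}.
Arguments owner {V}.
Arguments delta {V}.
Arguments payoff {V}.

Definition is_random {V : finType} (G : game V) (v : V) : bool :=
  if owner G v is Random then true else false.

Definition wf_game {V : finType} (G : game V) : Prop :=
  (forall v, exists v', edge G v v') /\
  (forall v, owner G v = Random ->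
     (forall v', edge G v v' -> 0 < delta G v v') /\
     (forall v', ~~ edge G v v' -> delta G v v' = 0) /\
     \sum_(v' | edge G v v') delta G v v' = 1).

Definition is_play {V : finType} (G : game V) (pi : nat -> V) : Prop :=
  forall n, edge G (pi n) (pi n.+1).

(* deterministic strategies: [sigma h x] is the successor chosen after the
   finite prefix [rcons h x] (history [h], last vertex [x]). *)
Definition strat (V : finType) := seq V -> V -> V.

Definition is_strategy {V : finType} (G : game V) (i : player)
  (sigma : strat V) : Prop :=
  forall h x, owner G x = i -> edge G x (sigma h x).

(* (nat -> V with the σ-algebra generated by cylinders, i.e. the       *)
(*  product/Borel σ-algebra; the point v0 only serves to make the      *)
(*  carrier a pointedType).                                            *)
Section PlaysType.
Variables (V : finType) (v0 : V).
Definition Plays of V := nat -> V.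
HB.instance Definition _ := gen_eqMixin (Plays v0).
HB.instance Definition _ := gen_choiceMixin (Plays v0).
HB.instance Definition _ := isPointed.Build (Plays v0) (fun _ => v0).
End PlaysType.
Arguments Plays {V}.

Definition cylset {V : finType} (v0 : V) (s : seq V) : set (Plays v0) :=
  [set pi : Plays v0 | forall i, (i < size s)%N -> (pi : nat -> V) i = nth v0 s i].

Definition cylinders {V : finType} (v0 : V) : set (set (Plays v0)) :=
  [set A | exists s : seq V, A = cylset v0 s].

Definition PlaySp {V : finType} (v0 : V) := g_sigma_algebraType (cylinders v0).

Definition trans {R : realType} {V : finType} (G : game V)
  (sigma1 sigma2 : strat V) (h : seq V) (x y : V) : R :=
  match owner G x with
  | Player1 => (sigma1 h x == y)%:R
  | Player2 => (sigma2 h x == y)%:R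
  | Random => ratr (delta G x y)
  end.

Fixpoint pathprob {R : realType} {V : finType} (G : game V)
  (sigma1 sigma2 : strat V) (h : seq V) (x : V) (rest : seq V) : R :=
  match rest with
  | [::] => 1
  | y :: rest' => trans G sigma1 sigma2 h x y * pathprob G sigma1 sigma2 (rcons h x) y rest'
  end.

Definition cylprob {R : realType} {V : finType} (G : game V)
  (sigma1 sigma2 : strat V) (v : V) (s : seq V) : R :=
  match s with
  | [::] => 1
  | x :: rest => (x == v)%:R * pathprob G sigma1 sigma2 [::] x rest
  end.

(* P is the probability measure on plays induced by (sigma1, sigma2) and
   the initial vertex v (it is uniquely determined by its values on
   cylinders, and exists by the Ionescu-Tulcea theorem). *)
Definition induced_measure {R : realType} {V : finType} (G : game V)
  (sigma1 sigma2 : strat V) (v : V) (P : probability (PlaySp v) R) : Prop :=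
  forall s : seq V, P (cylset v s) = (cylprob G sigma1 sigma2 v s)%:E.

Definition borel_objective {R : realType} {V : finType} (phi : (nat -> V) -> R) : Prop :=
  forall v0 : V, measurable_fun [set: PlaySp v0] (phi : PlaySp v0 -> R).

Definition bounded_objective {R : realType} {V : finType} (G : game V)
  (phi : (nat -> V) -> R) : Prop :=
  exists W : nat, forall pi, is_play G pi -> `|phi pi| <= W%:R.

Definition prefix_independent {R : realType} {V : finType} (G : game V)
  (phi : (nat -> V) -> R) : Prop :=
  forall (pi pi' : nat -> V) (i j : nat), is_play G pi -> is_play G pi' ->
    (forall n, pi (i + n)%N = pi' (j + n)%N) -> phi pi = phi pi'.

Definition measure_family (R : realType) (V : finType) :=
  forall (sigma1 sigma2 : strat V) (v : V), probability (PlaySp v) R.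

Definition game_value {R : realType} {V : finType} (G : game V)
  (P : measure_family R V) (phi : (nat -> V) -> R) (v : V) : \bar R :=
  ereal_sup [set ereal_inf [set (\int[P sigma1 sigma2 v]_x (phi x)%:E)%E
                              | sigma2 in is_strategy G Player2]
            | sigma1 in is_strategy G Player1].

Definition boundary {R : realType} {V : finType} (G : game V) (r : V -> R) (v : V) : Prop :=
  owner G v = Random /\ exists v', edge G v v' /\ r v' != r v.

Definition pclass {R : realType} {V : finType} (G : game V) (r : V -> R)
  (u : V) (c : R) : rat :=
  \sum_(v' | edge G u v' && (r v' == c)) delta G u v'.

Definition maxden {V : finType} (G : game V) : nat :=
  \max_(v | is_random G v) \max_(v' | edge G v v') `|denq (delta G v v')|%N.

(* Main.v *)
Require Import Defs.
From HB Require Import structures.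
From mathcomp Require Import all_boot all_order all_algebra.
From mathcomp Require Import all_classical all_reals all_analysis.
From mathcomp Require Import perm.
Import Order.TTheory GRing.Theory Num.Theory.
Local Open Scope classical_set_scope.
Local Open Scope ring_scope.


Lemma den_dvd (x : rat) (d : nat) : (d%:R * x) \is a Num.int -> (`|denq x| %| d)%N.
Proof.
case/intrP => z Hz.
have e : (d%:Z * numq x = z * denq x).
  apply: (@intr_inj rat); rewrite !intrM numqE -Hz mulrA; congr (_ * _).
have e2 := congr1 absz e; rewrite !abszM /= in e2.
have : (`|denq x| %| d * `|numq x|)%N by rewrite e2 dvdn_mull.
by rewrite Gauss_dvdl // coprime_sym coprime_num_den.
Qed.

Lemma int_of_dvd (x : rat) (d : nat) : (`|denq x| %| d)%N -> (d%:R * x) \is a Num.int.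
Proof.
case/dvdnP => c ->; rewrite natrM -mulrA.
have -> : (`|denq x|%:R : rat) = (denq x)%:~R by rewrite -absz_denq.
rewrite [_ * x]mulrC -numqE.
by rewrite rpredM ?rpred_nat ?rpred_int.
Qed.


Lemma det_int n (A : 'M[rat]_n) : (forall i j, A i j \is a Num.int) -> \det A \is a Num.int.
Proof.
move=> HA; rewrite /determinant; apply: rpred_sum => s _.
by apply: rpredM; [apply: rpredX; apply: rpredN; apply: rpred1 | apply: rpred_prod => i _].
Qed.

Lemma sub_sum_le (I : finType) (P : pred I) (F : I -> rat) :
  (forall i, 0 <= F i) -> \sum_(i | P i) F i <= \sum_i F i.
Proof.
move=> H; rewrite [X in _ <= X](bigID P) /=.
by rewrite Num.Theory.lerDl sumr_ge0.
Qed.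

Lemma det_bound n (A : 'M[rat]_n) (c : rat) :
  (forall i, \sum_j `|A i j| <= c) -> `|\det A| <= c ^+ n.
Proof.
move=> HA; rewrite /determinant.
apply: le_trans (ler_norm_sum _ _ _) _.
under eq_bigr => s _ do rewrite normrM normrX normrN1 expr1n mul1r normr_prod.
pose F (f : {ffun 'I_n -> 'I_n}) := \prod_i `|A i (f i)|.
have -> : \sum_(s : perm_of 'I_n) \prod_i `|A i (s i)| = \sum_(s in [set: perm_of 'I_n]) F (pval s).
  apply: eq_big => [s|s _]; first by rewrite in_setT. by rewrite /F; apply: eq_bigr => i _; rewrite -pvalE.
rewrite -(big_imset _ (in2W val_inj)) /=.
apply: (@le_trans _ _ (\sum_f F f)).
  by apply: sub_sum_le => f; rewrite /F prodr_ge0.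
rewrite /F -(bigA_distr_bigA (fun i j => `|A i j|)) /=.
rewrite -[n in c ^+ n]card_ord -prodr_const.
apply: ler_prod => i _; rewrite sumr_ge0 //= HA.
Qed.

Theorem proposition13 (R : realType) (V : finType) (G : game V)
  (P : measure_family R V) (phi : (nat -> V) -> R) (r : V -> R)
  (k m : nat) (hmk : (m <= k)%N) (cv : 'I_k -> R) (u : 'I_m -> V) :
  wf_game G ->
  (* P is the family of probability measures induced by strategy pairs *)
  (forall sigma1 sigma2 v, induced_measure G sigma1 sigma2 v (P sigma1 sigma2 v)) ->
  (* phi is a bounded, prefix-independent, Borel objective *)
  borel_objective phi -> bounded_objective G phi -> prefix_independent G phi ->
  (* r = r* is the expected value vector *)
  (forall v, (r v)%:E = game_value G P phi v) ->
  (* C_j = {v | r v = cv j}, j < k, enumerate exactly the classes of r *)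
  injective cv ->
  (forall v, exists j, r v = cv j) ->
  (forall j, exists v, r v = cv j) ->
  (* exactly the first m classes contain boundary vertices, m >= 1 *)
  (0 < m)%N ->
  (forall j : 'I_k, (j < m)%N <-> exists v, r v = cv j /\ boundary G r v) ->
  (* increasing values within C_1..C_m and within C_{m+1}..C_k *)
  (forall j j' : 'I_k, (j < j')%N -> ((j' < m)%N || (m <= j)%N) -> cv j < cv j') ->
  (* u_i is a boundary vertex of C_i *)
  (forall i : 'I_m, boundary G r (u i) /\ r (u i) = cv (widen_ord hmk i)) ->
  let p := fun (i : 'I_m) (j : 'I_k) => pclass G r (u i) (cv j) in
  let QB : 'M[rat]_m := \matrix_(i, j) p i (widen_ord hmk j) in
  let alpha : nat := \big[lcmn/1%N]_(i < m) \big[lcmn/1%N]_(j < k) `|denq (p i j)|%N in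
  let D : rat := \det (alpha%:R *: (1%:M - QB)) in
  let N := maxden G in
  (exists z : int, D = z%:~R) /\
  `|D| <= ((2 * alpha) ^ m)%:R /\
  ((2 * alpha) ^ m <= 2 ^ #|V| * N ^ (#|V| ^ 3))%N.

Proof.
move=> wf _ _ _ _ _ cvinj _ _ m0 _ _ Hu p QB alpha D N.
have Hrand i : owner G (u i) = Random by case: (Hu i) => -[].
have Hdel i := (wf.2 (u i) (Hrand i)).
have dge0 i v' : 0 <= delta G (u i) v'.
  case: (boolP (edge G (u i) v')) => e; first by rewrite ltW // (Hdel i).1.
  by rewrite (Hdel i).2.1.
have pge0 i j : 0 <= p i j by rewrite /p /pclass sumr_ge0.
have psum i : \sum_(j < m) p i (widen_ord hmk j) <= 1.
  rewrite -(Hdel i).2.2 /p /pclass.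
  under eq_bigr => j _ do rewrite big_mkcondr /=.
  rewrite exchange_big /=; apply: ler_sum => v' _.
  case: (pickP (fun j => r v' == cv (widen_ord hmk j))) => [j0 Hj0|Hn].
    rewrite (bigD1 j0) //= Hj0 big1 ?addr0 // => j Hj.
    case: ifP => // /eqP Hj'; move/eqP: Hj0 => Hj0.
    have := cvinj _ _ (etrans (esym Hj') Hj0) => /(congr1 val) /= hv.
    by rewrite (val_inj hv) eqxx in Hj.
  by rewrite big1 // => j _; rewrite Hn.
have Hint : forall i j, (`|denq (p i j)| %| alpha)%N.
  move=> i j; apply: (biglcmn_sup i) => //; exact: (biglcmn_sup j).
set A := alpha%:R *: (1%:M - QB).
have Aij i j : A i j = alpha%:R * ((1%:M : 'M[rat]_m) i j - p i (widen_ord hmk j)).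
  by rewrite /A /QB !mxE.
have Dint : D \is a Num.int.
  apply: det_int => i j; rewrite Aij mulrBr; apply: rpredB; last exact: int_of_dvd.
  by rewrite mxE rpredM ?rpred_nat // rpredMn ?rpred1.
have id1 i : \sum_j `|(1%:M : 'M[rat]_m) i j| = 1.
  rewrite (bigD1 i) //= big1 => [|j hj]; rewrite !mxE.
    by rewrite eqxx normr1 addr0.
  by rewrite eq_sym (negbTE hj) normr0.
have Dle : `|D| <= ((2 * alpha) ^ m)%:R.
  rewrite natrX; apply: det_bound => ii.
  under eq_bigr => j _ do rewrite Aij normrM ger0_norm ?ler0n //.
  rewrite -mulr_sumr natrM mulrC ler_wpM2r ?ler0n //.
  apply: (@le_trans _ _ (\sum_j (`|(1%:M : 'M[rat]_m) ii j| + `|p ii (widen_ord hmk j)|))).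
    by apply: ler_sum => j _; apply: ler_normB.
  rewrite big_split /= id1.
  under eq_bigr => j _ do rewrite ger0_norm //.
  by rewrite -[2%:R]/(1 + 1) lerD2l psum.
split; first by apply/intrP.
split; first exact: Dle.
have uinj : injective u.
  move=> i i' e; have := (Hu i).2; rewrite e (Hu i').2 => /cvinj /(congr1 val) /= hv.
  exact: val_inj.
have mV : (m <= #|V|)%N by have := leq_card u uinj; rewrite card_ord.
have dle i v' : (`|denq (delta G (u i) v')| <= N)%N.
  have ri : is_random G (u i) by rewrite /is_random Hrand.
  have h1 := leq_bigmax_cond (F := fun v => (\max_(v'| edge G v v') `|denq (delta G v v')|)%N) _ ri.
  have h3 w (ew : edge G (u i) w) : (`|denq (delta G (u i) w)| <= N)%N.
    have h2 := leq_bigmax_cond (F := fun v' => `|denq (delta G (u i) v')|%N) _ ew.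
    exact: leq_trans h2 h1.
  case: (boolP (edge G (u i) v')) => e; first exact: h3.
  rewrite (Hdel i).2.1 //.
  have [v1 e1] := wf.1 (u i).
  by apply: leq_trans (h3 _ e1); rewrite absz_gt0 denq_neq0.
have N0 : (0 < N)%N.
  have [v1 _] := wf.1 (u (Ordinal m0)).
  by apply: leq_trans (dle (Ordinal m0) v1); rewrite absz_gt0 denq_neq0.
pose M := (\prod_(i < m) \prod_(v' : V) `|denq (delta G (u i) v')|)%N.
have M0 : (0 < M)%N.
  by rewrite prodn_gt0 // => i; rewrite prodn_gt0 // => v'; rewrite absz_gt0 denq_neq0.
have aM : (alpha %| M)%N.
  apply/dvdn_biglcmP => i _; apply/dvdn_biglcmP => j _.
  apply: den_dvd; rewrite /p /pclass mulr_sumr; apply: rpred_sum => v' _.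
  apply: int_of_dvd; rewrite /M (bigD1 i) //= (bigD1 v') //=.
  by rewrite -mulnA dvdn_mulr.
have MN : (M <= N ^ (#|V| * m))%N.
  have H1 c : (\prod_(i < m) c = c ^ m)%N by rewrite prod_nat_const card_ord.
  have H2 c : (\prod_(v' : V) c = c ^ #|V|)%N by rewrite prod_nat_const.
  rewrite /M expnM -H1.
  apply: leq_prod => i _; rewrite -H2.
  by apply: leq_prod => v' _; apply: dle.
have aN : (alpha <= N ^ (#|V| * m))%N := leq_trans (dvdn_leq M0 aM) MN.
rewrite expnMn leq_mul //; first by rewrite leq_pexp2l.
apply: (@leq_trans ((N ^ (#|V| * m)) ^ m)); first by rewrite leq_exp2r.
rewrite -expnM; apply: (leq_pexp2l N0).
have e3 : (#|V| ^ 3 = #|V| * (#|V| * #|V|))%N by rewrite !expnS expn0 muln1.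
rewrite e3 -mulnA; apply: leq_mul; first exact: leqnn.
exact: (leq_mul mV mV).
Qed.
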